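(* Let $n$ be a prime, let $\alpha$ be a primitive element of $\mathbb{F}_{2^n}$, and identify $\mathbb{F}_2^n$ with $\mathbb{F}_{2^n}$ as $\mathbb{F}_2$-vector spaces. Let $X=\{0,\alpha^{i_1},\dots,\alpha^{i_{2^k-1}}\}$ be a $k$-dimensional subspace with $|\Delta(X)|=(2^k-1)(2^k-2)$, where $\Delta(X)=\{i_r-i_s \bmod (2^n-1) : 1\le r,s\le 2^k-1,\ r\ne s\}$. Then the cyclic shifts $\alpha^jX$, $0\le j\le 2^n-2$, form $2^n-1$ distinct $k$-dimensional subspaces, and the $\frac{(2^k-1)(2^{k-1}-1)}{3}\cdot(2^n-1)$ two-dimensional subspaces contained in these $2^n-1$ subspaces (counted $\frac{(2^k-1)(2^{k-1}-1)}{3}$ per subspace) are all distinct.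
   Context: The exponents $i_r$ are taken in $\mathbb{Z}_{2^n-1}$. The cyclic shift map $\Phi_j$ sends $\alpha^i\mapsto\alpha^{i+j}$ and $0\mapsto 0$. A $k$-dimensional subspace over $\mathbb{F}_2$ contains exactly $\frac{(2^k-1)(2^{k-1}-1)}{3}$ two-dimensional subspaces. *)

(* Defs.v *)
From HB Require Import structures.
From mathcomp Require Import all_boot all_order all_algebra all_field.
Set Implicit Arguments. Unset Strict Implicit. Unset Printing Implicit Defensive.
Import GRing.Theory.
Local Open Scope ring_scope.

Definition cshift (F : finFieldType) (alpha : F) (j : nat) (X : {set F}) : {set F} :=
  [set alpha ^+ j * x | x in X].

Definition Delta (m k : nat) (i : 'I_(2 ^ k - 1) -> 'Z_m) : {set 'Z_m} :=
  [set i rs.1 - i rs.2 | rs in [set rs : 'I_(2 ^ k - 1) * 'I_(2 ^ k - 1) | rs.1 != rs.2]].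

(* Main.v *)
Require Import Defs.
From HB Require Import structures.
From mathcomp Require Import all_boot all_order all_algebra all_field.
Set Implicit Arguments. Unset Strict Implicit. Unset Printing Implicit Defensive.
Import GRing.Theory.
Local Open Scope ring_scope.

Section S.
Variables (n k : nat) (F : finFieldType) (h2 : (2 \in [pchar F])%N).
Variable (alpha : F).
Hypothesis N1 : (1 < 2 ^ n - 1)%N.
Hypothesis halpha : (2 ^ n - 1)%N.-primitive_root alpha.
Variable (i : 'I_(2 ^ k - 1) -> 'Z_(2 ^ n - 1)).
Hypothesis hDelta : #|Delta i| = ((2 ^ k - 1) * (2 ^ k - 2))%N.

Lemma keyP (r s r' s' : 'I_(2 ^ k - 1)) : r != s -> r' != s' ->
  alpha ^+ (i r) * alpha ^+ (i s') = alpha ^+ (i r') * alpha ^+ (i s) -> r = r' /\ s = s'.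
Proof.
move=> rs rs' E.
pose D := [set rs : 'I_(2 ^ k - 1) * 'I_(2 ^ k - 1) | rs.1 != rs.2].
have cD : #|D| = ((2 ^ k - 1) * (2 ^ k - 2))%N.
  have -> : D = ~: [set (r, r) | r : 'I_(2 ^ k - 1)].
    apply/setP => -[a b]; rewrite !inE /=; congr negb.
    apply/eqP/imsetP => [->|[c _ [-> ->]]] //; by exists b.
  rewrite cardsCs setCK card_prod card_imset; last by move=> a b [].
  rewrite card_ord; set m := (2 ^ k - 1)%N.
  have -> : (2 ^ k - 2 = m - 1)%N by rewrite /m -subnDA.
  by rewrite mulnBr muln1.
have /imset_injP inj : #|[set i rs.1 - i rs.2 | rs in D]| == #|D|.
  by rewrite cD -hDelta.
have Hm : (i r + i s' == i r' + i s %[mod 2 ^ n - 1])%N.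
  by rewrite -(eq_prim_root_expr halpha) !exprD E.
have HZ : forall a b : 'Z_(2 ^ n - 1), a + b = ((a : nat) + b)%N%:R.
  by move=> a b; rewrite natrD !natr_Zp.
have HZ2 : i r + i s' = i r' + i s.
  by apply: val_inj; rewrite !HZ /= !val_Zp_nat // (eqP Hm).
have HZ3 : i r - i s = i r' - i s'.
  by apply/eqP; rewrite subr_eq addrAC -HZ2 addrK.
have := inj (r, s) (r', s'); rewrite !inE /= => /(_ rs rs' HZ3) [] -> ->.
by [].
Qed.
End S.
From mathcomp Require Import ring.
Unset Implicit Arguments.

Theorem lemma7 (n k : nat) (F : finFieldType) (h2 : (2 \in [pchar F])%N)
    (hn : prime n) (hF : #|F| = (2 ^ n)%N)
    (alpha : F) (halpha : (2 ^ n - 1)%N.-primitive_root alpha)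
    (X : {vspace pPrimeCharType h2}) (hk : (0 < k)%N) (hX : \dim X = k)
    (i : 'I_(2 ^ k - 1) -> 'Z_(2 ^ n - 1))
    (hXi : [set x : F | (x : pPrimeCharType h2) \in X]
           = 0 |: [set alpha ^+ (i r : nat) | r : 'I_(2 ^ k - 1)])
    (hDelta : #|Delta i| = ((2 ^ k - 1) * (2 ^ k - 2))%N) :
  let SX := [set x : F | (x : pPrimeCharType h2) \in X] in
  (forall j : 'I_(2 ^ n - 1), exists Z : {vspace pPrimeCharType h2},
      \dim Z = k /\ [set x : F | (x : pPrimeCharType h2) \in Z] = cshift alpha j SX) /\
  (forall j j' : 'I_(2 ^ n - 1), cshift alpha j SX = cshift alpha j' SX -> j = j') /\
  (forall (j j' : 'I_(2 ^ n - 1)) (Y : {vspace pPrimeCharType h2}),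
      \dim Y = 2%N ->
      (forall y : F, (y : pPrimeCharType h2) \in Y -> y \in cshift alpha j SX) ->
      (forall y : F, (y : pPrimeCharType h2) \in Y -> y \in cshift alpha j' SX) ->
      j = j').
Proof.
move=> SX.
have hS : SX = 0 |: [set alpha ^+ (i r : nat) | r : 'I_(2 ^ k - 1)] := hXi.
have N1 : (1 < 2 ^ n - 1)%N.
  have n2 := prime_gt1 hn.
  have : (2 ^ 2 <= 2 ^ n)%N by rewrite leq_exp2l.
  by case: (2 ^ n)%N => [|[|[|[|m]]]].
have anz : alpha != 0.
  apply/negP => /eqP a0; have := prim_expr_order halpha.
  by rewrite a0 expr0n; case: (2 ^ n - 1)%N N1 => [|m] //= _ /eqP; rewrite eq_sym oner_eq0.
have key := keyP N1 halpha hDelta.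
have memS : forall x, x \in SX -> x != 0 -> exists r, x = alpha ^+ (i r : nat).
  move=> x; rewrite hS !inE => /orP [/eqP -> | /imsetP [r _ ->]]; first by rewrite eqxx.
  by move=> _; exists r.
have ejinj : forall j j' : 'I_(2 ^ n - 1), alpha ^+ j = alpha ^+ j' -> j = j'.
  move=> j j' /eqP; rewrite (eq_prim_root_expr halpha) !modn_small // => /eqP E.
  exact: val_inj.
have common : forall (j j' : nat) (a b c e : F), alpha ^+ j * a = alpha ^+ j' * b ->
    alpha ^+ j * c = alpha ^+ j' * e -> a * e = c * b.
  move=> j j' a b c e E1 E2.
  have nz : alpha ^+ j * alpha ^+ j' != 0 by rewrite mulf_neq0 // expf_neq0.
  apply: (mulfI nz).
  have -> : alpha ^+ j * alpha ^+ j' * (a * e) = (alpha ^+ j * a) * (alpha ^+ j' * e) by ring.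
  have -> : alpha ^+ j * alpha ^+ j' * (c * b) = (alpha ^+ j * c) * (alpha ^+ j' * b) by ring.
  by rewrite E1 E2; ring.
have neq : forall (j j' : 'I_(2 ^ n - 1)) r s, j != j' ->
    alpha ^+ j * alpha ^+ (i r : nat) = alpha ^+ j' * alpha ^+ (i s : nat) -> r != s.
  move=> j j' r s njj E; apply/eqP => rs; move: E; rewrite rs => /mulIf E.
  by move/eqP: njj; apply; apply: ejinj; apply: E; rewrite expf_neq0.
split.
  move=> j; pose f := amull (alpha ^+ j : pPrimeCharType h2).
  have fE : forall v, f v = alpha ^+ j * v by move=> v; rewrite lfunE.
  have kf : lker f == 0%VS by rewrite lker0_amull // unitfE expf_neq0.
  exists (f @: X)%VS; split.
    by rewrite limg_dim_eq // (eqP kf) capv0.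
  apply/setP => y; rewrite inE; apply/memv_imgP/imsetP => [[u uX ->]|[x xS ->]].
    by exists u; [rewrite inE | rewrite fE].
  by exists x; [move: xS; rewrite inE | rewrite fE].
have inS : forall r, alpha ^+ (i r : nat) \in SX.
  by move=> r; rewrite hS; apply/setU1P; right; apply: imset_f.
have pnz : forall (j : nat) r, alpha ^+ j * alpha ^+ (i r : nat) != 0.
  by move=> j r; rewrite mulf_neq0 // expf_neq0.
have getr : forall (j j' : nat) r, alpha ^+ j * alpha ^+ (i r : nat) \in cshift alpha j' SX ->
    exists s, alpha ^+ j * alpha ^+ (i r : nat) = alpha ^+ j' * alpha ^+ (i s : nat).
  move=> j j' r /imsetP [x xS E].
  have [|s xs] := memS x xS.
    by apply/eqP => x0; move: (pnz j r); rewrite E x0 mulr0 eqxx.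
  by exists s; rewrite E xs.
split.
  move=> j j' E; case: (eqVneq j j') => // njj; exfalso.
  have m0 : (0 < 2 ^ k - 1)%N by rewrite subn_gt0 -{1}(expn0 2) ltn_exp2l.
  pose r0 := Ordinal m0.
  have [r1 E1] : exists s, alpha ^+ j * alpha ^+ (i r0 : nat) = alpha ^+ j' * alpha ^+ (i s : nat).
    by apply: getr; rewrite -E; apply: imset_f.
  have [r2 E2] : exists s, alpha ^+ j * alpha ^+ (i r1 : nat) = alpha ^+ j' * alpha ^+ (i s : nat).
    by apply: getr; rewrite -E; apply: imset_f.
  have := common _ _ _ _ _ _ E1 E2.
  move=> /(key r0 r1 r1 r2 (neq _ _ _ _ njj E1) (neq _ _ _ _ njj E2)) [r01 _].
  by move: (neq _ _ _ _ njj E1); rewrite r01 eqxx.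
move=> j j' Y dY Hj Hj'; case: (eqVneq j j') => // njj; exfalso.
have dec : forall (l : nat) (y : F), y \in cshift alpha l SX -> y != 0 ->
    exists r, y = alpha ^+ l * alpha ^+ (i r : nat).
  move=> l y /imsetP [x xS ->] ynz.
  have [|r ->] := memS x xS; last by exists r.
  by apply/eqP => x0; move: ynz; rewrite x0 mulr0 eqxx.
have two : forall y : F, (y : pPrimeCharType h2) \in Y -> y != 0 ->
    exists r s, y = alpha ^+ j * alpha ^+ (i r : nat) /\ y = alpha ^+ j' * alpha ^+ (i s : nat).
  move=> y yY ynz.
  have [r Er] := dec _ _ (Hj y yY) ynz.
  have [s Es] := dec _ _ (Hj' y yY) ynz.
  by exists r, s.
pose b := vbasis Y.
have fb : free b := basis_free (vbasisP Y).
have sb : size b = 2%N by rewrite size_tuple.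
have b0 : b`_0 \in b by apply: mem_nth; rewrite sb.
have b1 : b`_1 \in b by apply: mem_nth; rewrite sb.
have [r1 [s1 [E1 E1']]] := two _ (vbasis_mem b0) (free_not0 fb b0).
have [r2 [s2 [E2 E2']]] := two _ (vbasis_mem b1) (free_not0 fb b1).
have D1 : alpha ^+ j * alpha ^+ (i r1 : nat) = alpha ^+ j' * alpha ^+ (i s1 : nat) by rewrite -E1 -E1'.
have D2 : alpha ^+ j * alpha ^+ (i r2 : nat) = alpha ^+ j' * alpha ^+ (i s2 : nat) by rewrite -E2 -E2'.
have := common _ _ _ _ _ _ D1 D2.
move=> /(key r1 s1 r2 s2 (neq _ _ _ _ njj D1) (neq _ _ _ _ njj D2)) [r12 _].
have : b`_0 != b`_1 by rewrite nth_uniq ?sb // free_uniq.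
by rewrite E1 E2 r12 eqxx.
Qed.
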